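(* Let $V$ be a vertex algebra and let $M$ be a $\mathbb{C}$-subspace of $V$ with $C_2(V)\subseteq M$. Let $a\in V$. Then: (1) $a\in r_{0,-1}(M)$ if and only if $a+C_2(V)\in r(M/C_2(V))$; (2) $a\in sr_{0,-1}(M)$ if and only if $a+C_2(V)\in sr(M/C_2(V))$. Consequently, $M$ is an $MZ_{0,-1}$-subspace of $V$ if and only if $M/C_2(V)$ is a Mathieu-Zhao subspace of the commutative associative algebra $V/C_2(V)$.
   Context: A vertex algebra $(V,Y,\mathbf{1})$ is over $\mathbb{C}$; for $u\in V$ write $Y(u,z)=\sum_{n\in\mathbb{Z}}u_nz^{-n-1}$ with $u_n\in\operatorname{End}V$. Iterated products are nested to the right: $v_{n_1}v_{n_2}\cdots v_{n_t}v=v_{n_1}(v_{n_2}(\cdots(v_{n_t}v)))$. $C_2(V)=\operatorname{span}_{\mathbb{C}}\{u_{-2}v: u,v\in V\}$. The quotient $V/C_2(V)$ is a commutative associative unital algebra with product $(a+C_2(V))(b+C_2(V))=a_{-1}b+C_2(V)$ and identity $\mathbf{1}+C_2(V)$. For a subspace $M\subseteq V$: $r_{0,-1}(M)$ is the set of $v\in V$ for which there is $m\ge 0$ with $v_{n_1}\cdots v_{n_t}v\in M$ for all $t\ge m$ and all $n_1,\dots,n_t\in\{0,-1\}$. $lsr_{0,-1}(M)$ is the set of $v\in V$ such that for every $b\in V$ there is $m\ge0$ with $b_sv_{n_1}\cdots v_{n_t}v\in M$ for all $t\ge m$ and all $s,n_1,\dots,n_t\in\{0,-1\}$. $rsr_{0,-1}(M)$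 is the set of $v\in V$ such that for every $w\in V$ there is $m\ge 0$ with $(v_{n_1}\cdots v_{n_t}v)_nw\in M$ for all $t\ge m$ and all $n,n_1,\dots,n_t\in\{0,-1\}$. $sr_{0,-1}(M)=lsr_{0,-1}(M)\cap rsr_{0,-1}(M)$. $M$ is an $MZ_{0,-1}$-subspace of $V$ if $r_{0,-1}(M)=sr_{0,-1}(M)$. For a commutative associative unital algebra $A$ and a subspace $U$: $r(U)=\{a\in A:\exists m\ge1,\ a^t\in U\ \forall t\ge m\}$, $sr(U)=\{a\in A:\forall b,c\in A\ \exists m\ge 1,\ ba^tc\in U\ \forall t\ge m\}$; $U$ is a Mathieu-Zhao subspace of $A$ if $r(U)=sr(U)$. *)

(* Defs.v *)
From HB Require Import structures.
From mathcomp Require Import all_boot all_order all_algebra.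
From mathcomp Require Import complex.
From mathcomp Require Import Rstruct.
From Stdlib Require Rdefinitions.
Set Implicit Arguments. Unset Strict Implicit. Unset Printing Implicit Defensive.
Import Order.TTheory GRing.Theory Num.Theory.
Local Open Scope ring_scope.

Definition CC : fieldType := complex Rdefinitions.R.

Definition binz (k : int) (i : nat) : CC :=
  (\prod_(j < i) (k%:~R - j%:R)) / (i`!)%:R.

(* A vertex algebra (V, Y, 1) over C: Y u n v stands for u_n v.
   Axioms (Lepowsky--Li): linearity, truncation, vacuum, creation and the
   Jacobi identity in its component (Borcherds) form.  All sums in the
   Borcherds identity are finite by truncation; we state it as equality of
   the partial sums over i < N for all N large enough. *)
Definition is_vertex_algebra (V : lmodType CC) (Y : V -> int -> V -> V) (one : V) : Prop :=
  [/\ (forall (c : CC) (u u' v : V) (n : int), Y (c *: u + u') n v = c *: Y u n v + Y u' n v),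
      (forall (c : CC) (u v v' : V) (n : int), Y u n (c *: v + v') = c *: Y u n v + Y u n v'),
      (forall u v : V, exists N : int, forall n : int, N <= n -> Y u n v = 0),
      (forall (n : int) (v : V), Y one n v = if n == -1 then v else 0)
    & (forall u : V, Y u (-1) one = u /\ forall n : int, 0 <= n -> Y u n one = 0)
      /\ (forall (u v w : V) (m n k : int), exists N0 : nat, forall N : nat, (N0 <= N)%N ->
           \sum_(i < N) binz m i *: Y (Y u (k + i%:Z) v) (m + n - i%:Z) w
           = \sum_(i < N) ((-1) ^+ i * binz k i) *:
                 (Y u (m + k - i%:Z) (Y v (n + i%:Z) w)
                  - (-1) ^ k *: Y v (n + k - i%:Z) (Y u (m + i%:Z) w)))].

Definition is_subspace (V : lmodType CC) (M : V -> Prop) : Prop :=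
  [/\ M 0, (forall x y, M x -> M y -> M (x + y)) & (forall (c : CC) x, M x -> M (c *: x))].

Definition C2 (V : lmodType CC) (Y : V -> int -> V -> V) (x : V) : Prop :=
  exists s : seq (CC * V * V), x = \sum_(p <- s) p.1.1 *: Y p.1.2 (-2) p.2.

Definition in01 (n : int) : bool := (n == 0) || (n == -1).

Definition iterprod (V : lmodType CC) (Y : V -> int -> V -> V) (v : V) (s : seq int) : V :=
  foldr (fun n acc => Y v n acc) v s.

Definition r01 (V : lmodType CC) (Y : V -> int -> V -> V) (M : V -> Prop) (v : V) : Prop :=
  exists m : nat, forall s : seq int, all in01 s -> (m <= size s)%N -> M (iterprod Y v s).

Definition lsr01 (V : lmodType CC) (Y : V -> int -> V -> V) (M : V -> Prop) (v : V) : Prop :=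
  forall b : V, exists m : nat, forall (r : int) (s : seq int),
    in01 r -> all in01 s -> (m <= size s)%N -> M (Y b r (iterprod Y v s)).

Definition rsr01 (V : lmodType CC) (Y : V -> int -> V -> V) (M : V -> Prop) (v : V) : Prop :=
  forall w : V, exists m : nat, forall (n : int) (s : seq int),
    in01 n -> all in01 s -> (m <= size s)%N -> M (Y (iterprod Y v s) n w).

Definition sr01 (V : lmodType CC) (Y : V -> int -> V -> V) (M : V -> Prop) (v : V) : Prop :=
  lsr01 Y M v /\ rsr01 Y M v.

Definition MZ01 (V : lmodType CC) (Y : V -> int -> V -> V) (M : V -> Prop) : Prop :=
  forall v : V, r01 Y M v <-> sr01 Y M v.

Definition rad_alg (A : comPzRingType) (U : A -> Prop) (a : A) : Prop :=
  exists m : nat, (1 <= m)%N /\ forall t : nat, (m <= t)%N -> U (a ^+ t).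

Definition srad_alg (A : comPzRingType) (U : A -> Prop) (a : A) : Prop :=
  forall b c : A, exists m : nat, (1 <= m)%N /\ forall t : nat, (m <= t)%N -> U (b * a ^+ t * c).

Definition MZsub (A : comPzRingType) (U : A -> Prop) : Prop :=
  forall a : A, rad_alg U a <-> srad_alg U a.

(* pi : V -> A presents A as the algebra V/C_2(V): pi is additive and onto,
   with kernel exactly C_2(V), and maps the product a_{-1} b to the product of A
   and the vacuum to 1.  Any such (A, pi) is canonically isomorphic to V/C_2(V)
   with its commutative associative product (a + C_2)(b + C_2) = a_{-1} b + C_2. *)
Definition is_C2_quotient (V : lmodType CC) (Y : V -> int -> V -> V) (one : V)
    (A : comPzRingType) (pi : V -> A) : Prop :=
  [/\ (forall x y : V, pi (x + y) = pi x + pi y),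
      (forall z : A, exists x : V, pi x = z),
      (forall x : V, pi x = 0 <-> C2 Y x),
      (forall x y : V, pi (Y x (-1) y) = pi x * pi y)
    & pi one = 1].

Definition qimage (V : lmodType CC) (A : comPzRingType) (pi : V -> A) (M : V -> Prop) : A -> Prop :=
  fun z => exists x : V, M x /\ pi x = z.

(* Main.v *)
Require Import Defs.
From mathcomp Require Import all_boot all_order all_algebra.
From mathcomp Require Import ring zify complex Rstruct.
Import GRing.Theory Num.Theory.
Local Open Scope ring_scope.
Set Implicit Arguments. Unset Strict Implicit.

Lemma C2_0 (V : lmodType CC) (Y : V -> int -> V -> V) : C2 Y 0.
Proof. by exists [::]; rewrite big_nil. Qed.

Lemma C2_add (V : lmodType CC) (Y : V -> int -> V -> V) x y :
  C2 Y x -> C2 Y y -> C2 Y (x + y).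
Proof. by move=> [s1 ->] [s2 ->]; exists (s1 ++ s2); rewrite big_cat. Qed.

Lemma C2_scale (V : lmodType CC) (Y : V -> int -> V -> V) (c : CC) x :
  C2 Y x -> C2 Y (c *: x).
Proof.
move=> [s ->]; exists (map (fun p => (c * p.1.1, p.1.2, p.2)) s).
rewrite big_map scaler_sumr; apply: eq_bigr => p _ /=; by rewrite scalerA.
Qed.

Lemma C2_opp (V : lmodType CC) (Y : V -> int -> V -> V) x : C2 Y x -> C2 Y (- x).
Proof. by move=> h; rewrite -scaleN1r; apply: C2_scale. Qed.

Lemma C2_sub (V : lmodType CC) (Y : V -> int -> V -> V) x y :
  C2 Y x -> C2 Y y -> C2 Y (x - y).
Proof. by move=> hx hy; apply: C2_add => //; apply: C2_opp. Qed.

Lemma C2_gen (V : lmodType CC) (Y : V -> int -> V -> V) u w : C2 Y (Y u (-2) w).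
Proof. by exists [:: (1, u, w)]; rewrite big_seq1 /= scale1r. Qed.

Lemma C2_sum (V : lmodType CC) (Y : V -> int -> V -> V) L (F : 'I_L -> V) :
  (forall i, C2 Y (F i)) -> C2 Y (\sum_(i < L) F i).
Proof.
move=> h; apply: (big_ind (C2 Y)); [exact: C2_0| exact: C2_add |] => i _; exact: h.
Qed.

Lemma Y0r (V : lmodType CC) (Y : V -> int -> V -> V) (one : V) (HV : is_vertex_algebra Y one) u n :
  Y u n 0 = 0.
Proof.
case: HV => _ h2 _ _ _; have e := h2 1 u 0 0 n; rewrite !scale1r addr0 in e.
have := congr1 (fun z => z - Y u n 0) e; by rewrite /= addrK subrr => <-.
Qed.

Lemma Y0l (V : lmodType CC) (Y : V -> int -> V -> V) (one : V) (HV : is_vertex_algebra Y one) w n :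
  Y 0 n w = 0.
Proof.
case: HV => h1 _ _ _ _; have e := h1 1 0 0 w n; rewrite !scale1r addr0 in e.
have := congr1 (fun z => z - Y 0 n w) e; by rewrite /= addrK subrr => <-.
Qed.

Lemma YC2r (V : lmodType CC) (Y : V -> int -> V -> V) (one : V) (HV : is_vertex_algebra Y one) b n :
  (forall u x, C2 Y (Y b n (Y u (-2) x))) -> forall x, C2 Y x -> C2 Y (Y b n x).
Proof.
move=> h x [s ->]; elim: s => [|p s IH]; first by rewrite big_nil (Y0r HV); exact: C2_0.
rewrite big_cons; case: HV => _ h2 _ _ _; rewrite h2; apply: C2_add => //.
exact: C2_scale.
Qed.

Lemma YC2l (V : lmodType CC) (Y : V -> int -> V -> V) (one : V) (HV : is_vertex_algebra Y one) n w :
  (forall u x, C2 Y (Y (Y u (-2) x) n w)) -> forall x, C2 Y x -> C2 Y (Y x n w).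
Proof.
move=> h x [s ->]; elim: s => [|p s IH]; first by rewrite big_nil (Y0l HV); exact: C2_0.
rewrite big_cons; case: HV => h1 _ _ _ _; rewrite h1; apply: C2_add => //.
exact: C2_scale.
Qed.

Lemma binz0r k : binz k 0 = 1.
Proof. by rewrite /binz big_ord0 divr1. Qed.

Lemma binz0l i : (0 < i)%N -> binz 0 i = 0.
Proof. by case: i => // i _; rewrite /binz big_ord_recl /= subrr !mul0r. Qed.

Lemma sum_binz0 (V : lmodType CC) L (c : 'I_L.+1 -> CC) (F : 'I_L.+1 -> V) :
  \sum_(i < L.+1) (c i * binz 0 i) *: F i = c ord0 *: F ord0.
Proof.
rewrite big_ord_recl binz0r mulr1 big1 ?addr0 // => i _.
by rewrite binz0l // mulr0 scale0r.
Qed.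

Lemma sum_binz0' (V : lmodType CC) L (F : 'I_L.+1 -> V) :
  \sum_(i < L.+1) binz 0 i *: F i = F ord0.
Proof.
rewrite big_ord_recl binz0r scale1r big1 ?addr0 // => i _.
by rewrite binz0l // scale0r.
Qed.

Lemma natCC_neq0 n : (n.+1%:R : CC) != 0.
Proof. have := @pnatr_eq0 (complex Rdefinitions.R) n.+1. by move=> /= ->. Qed.

Lemma prod_m2 i : \prod_(j < i) (((-2 : int)%:~R : CC) - j%:R) = (-1) ^+ i * (i.+1)`!%:R.
Proof.
elim: i => [|i IH]; first by rewrite big_ord0 expr0 mul1r.
rewrite big_ord_recr /= IH.
have -> : (((-2 : int)%:~R : CC) - i%:R) = - (i.+2)%:R.
  by ring.
rewrite [(i.+2)`!]factS natrM exprS; ring.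
Qed.

Lemma binz_m2 i : binz (-2) i = (-1) ^+ i * (i.+1)%:R.
Proof.
rewrite /binz prod_m2 factS natrM mulrA mulfK //.
have := natCC_neq0 (i`!).-1; by rewrite prednK // fact_gt0.
Qed.

Lemma Dstep (V : lmodType CC) (Y : V -> int -> V -> V) (one : V) (HV : is_vertex_algebra Y one) K u w :
  Y (Y u (-2) one) (- (K.+2)%:Z) w = (K.+2)%:R *: Y u (- (K.+3)%:Z) w.
Proof.
have [_ _ _ hvac [_ hB]] := HV.
have [N0 HN] := hB u one w 0 (- (K.+2)%:Z) (-2).
have := HN (N0 + K).+2 ltac:(lia).
rewrite sum_binz0' /= addr0 add0r subr0 => ->.
have lt : (K.+1 < (N0 + K).+2)%N by rewrite ltnS ltnS leq_addl.
rewrite (bigD1 (Ordinal lt)) //= big1 ?addr0.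
  rewrite !hvac.
  have -> : (- (K.+2)%:Z + (K.+1)%:Z == -1) by apply/eqP; lia.
  have -> : (- (K.+2)%:Z + -2 - (K.+1)%:Z == -1) = false by apply/eqP; lia.
  rewrite scaler0 subr0 binz_m2 mulrA -exprMn mulrNN mulr1 expr1n mul1r.
  by have -> : (0 - 2 - (K.+1)%:Z) = - (K.+3)%:Z by lia.

move=> i /eqP hi; rewrite !hvac.
have -> : (- (K.+2)%:Z + i%:Z == -1) = false.
  apply/eqP => e; apply: hi; apply: val_inj => /=; lia.
have -> : (- (K.+2)%:Z + -2 - i%:Z == -1) = false by apply/eqP; lia.
by rewrite !(Y0r HV) scaler0 subr0 scaler0.
Qed.

Lemma C2neg (V : lmodType CC) (Y : V -> int -> V -> V) (one : V) (HV : is_vertex_algebra Y one) K u w :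
  C2 Y (Y u (- (K.+2)%:Z) w).
Proof.
elim: K u w => [|K IH] u w; first exact: C2_gen.
have e := Dstep HV K u w.
have -> : Y u (- (K.+3)%:Z) w = (K.+2%:R)^-1 *: Y (Y u (-2) one) (- (K.+2)%:Z) w.
  by rewrite e scalerA mulVf ?scale1r // natCC_neq0.
exact/C2_scale/IH.
Qed.

Lemma C2le (V : lmodType CC) (Y : V -> int -> V -> V) (one : V) (HV : is_vertex_algebra Y one) (n : int) u w :
  n <= -2 -> C2 Y (Y u n w).
Proof.
move=> hn; have [K eK] : exists K : nat, n = - (K.+2)%:Z.
  exists (`|n| - 2)%N; lia.
by rewrite eK; apply: C2neg HV K u w.
Qed.

Lemma C2_left (V : lmodType CC) (Y : V -> int -> V -> V) (one : V) (HV : is_vertex_algebra Y one) (m : int) b x :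
  m <= 0 -> C2 Y x -> C2 Y (Y b m x).
Proof.
move=> hm; apply: (YC2r HV) => u {}x.
have [_ _ _ hvac [_ hB]] := HV.
have [N0 HN] := hB b u x m (-2) 0.
have := HN N0.+1 (leqnSn _).
rewrite sum_binz0 /= expr0 expr0z ?scale1r ?addr0 ?subr0 => e.
have h : C2 Y (Y b m (Y u (-2) x) - Y u (-2) (Y b m x)).
  rewrite -e; apply: C2_sum => i; apply: C2_scale; apply: (C2le HV); lia.
rewrite -(subrK (Y u (-2) (Y b m x)) (Y b m (Y u (-2) x))).
exact: (C2_add h (C2_gen _ _ _)).
Qed.

Lemma C2_right (V : lmodType CC) (Y : V -> int -> V -> V) (one : V) (HV : is_vertex_algebra Y one) (n : int) w x :
  n <= 0 -> C2 Y x -> C2 Y (Y x n w).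
Proof.
move=> hn; apply: (YC2l HV) => u {}x.
have [_ _ _ hvac [_ hB]] := HV.
have [N0 HN] := hB u x w 0 n (-2).
have := HN N0.+1 (leqnSn _).
rewrite sum_binz0' /= ?addr0 ?add0r ?subr0 => ->.
apply: C2_sum => i; apply: C2_scale; apply: C2_sub.
  apply: (C2le HV); lia.
apply: C2_scale; apply: (C2le HV); lia.
Qed.

Lemma Yderiv (V : lmodType CC) (Y : V -> int -> V -> V) (one : V) (HV : is_vertex_algebra Y one) b x y :
  Y b 0 (Y x (-1) y) = Y (Y b 0 x) (-1) y + Y x (-1) (Y b 0 y).
Proof.
have [_ _ _ hvac [_ hB]] := HV.
have [N0 HN] := hB b x y 0 (-1) 0.
have := HN N0.+1 (leqnSn _).
rewrite sum_binz0 sum_binz0' /= expr0 expr0z ?scale1r ?addr0 ?add0r ?subr0 => ->.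
by rewrite subrK.
Qed.

Lemma Yrderiv (V : lmodType CC) (Y : V -> int -> V -> V) (one : V) (HV : is_vertex_algebra Y one) x y w :
  C2 Y (Y (Y x (-1) y) 0 w - (Y x (-1) (Y y 0 w) + Y y (-1) (Y x 0 w))).
Proof.
have [_ _ _ hvac [_ hB]] := HV.
have [N0 HN] := hB x y w 0 0 (-1).
have := HN N0.+1 (leqnSn _).
rewrite sum_binz0' big_ord_recl /= binz0r expr0 mulr1 scale1r ?addr0 ?add0r ?subr0 => ->.
rewrite exprN1 invrN1 scaleN1r opprK addrAC subrr add0r.
apply: C2_sum => i; apply: C2_scale; apply: C2_sub.
  apply: (C2le HV); rewrite /bump leq0n add1n; lia.
apply: C2_scale; apply: (C2le HV); rewrite /bump leq0n add1n; lia.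
Qed.

Lemma skewC2 (V : lmodType CC) (Y : V -> int -> V -> V) (one : V) (HV : is_vertex_algebra Y one) v :
  C2 Y (Y v 0 v).
Proof.
have [_ _ _ hvac [hcr hB]] := HV.
have hc1 u : Y u (-1) one = u := (hcr u).1.
have hc2 u n : 0 <= n -> Y u n one = 0 := (hcr u).2 n.
have [N0 HN] := hB v v one (-1) 0 0.
have := HN N0.+1 (leqnSn _).
rewrite sum_binz0 big_ord_recl /= binz0r scale1r expr0 expr0z ?scale1r ?addr0 ?add0r ?subr0.
rewrite !hc1 hc2 // (Y0r HV) sub0r => e.
have h : C2 Y (Y v 0 v *+ 2).
  rewrite mulr2n -[X in X + _]opprK -e opprD addrAC addNr add0r.
  apply: C2_opp; apply: C2_sum => i; apply: C2_scale; apply: (C2le HV); rewrite /bump leq0n add1n; lia.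
have e2 : Y v 0 v *+ 2 = (2%:R : CC) *: Y v 0 v by rewrite scaler_nat.
rewrite e2 in h.
have -> : Y v 0 v = (2%:R : CC)^-1 *: ((2%:R : CC) *: Y v 0 v).
  by rewrite scalerA mulVf ?scale1r // natCC_neq0.
exact: C2_scale.
Qed.

Lemma pi0 (V : lmodType CC) (Y : V -> int -> V -> V) (one : V) (A : comPzRingType) (pi : V -> A)
  (Hpi : is_C2_quotient Y one pi) : pi 0 = 0.
Proof.
have [hadd _ _ _ _] := Hpi; have := hadd 0 0; rewrite addr0 => e.
have := congr1 (fun z => z - pi 0) e; by rewrite /= addrK subrr => <-.
Qed.

Lemma piB (V : lmodType CC) (Y : V -> int -> V -> V) (one : V) (A : comPzRingType) (pi : V -> A)
  (Hpi : is_C2_quotient Y one pi) x y : pi (x - y) = pi x - pi y.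
Proof.
have [hadd _ _ _ _] := Hpi.
have e : pi (- y) = - pi y.
  apply/eqP; rewrite -subr_eq0 opprK -hadd addNr (pi0 Hpi) //.
by rewrite hadd e.
Qed.

Lemma pi_C2 (V : lmodType CC) (Y : V -> int -> V -> V) (one : V) (A : comPzRingType) (pi : V -> A)
  (Hpi : is_C2_quotient Y one pi) x y : C2 Y (x - y) -> pi x = pi y.
Proof.
have [_ _ hk _ _] := Hpi; move/hk; rewrite (piB Hpi) => /eqP; by rewrite subr_eq0 => /eqP.
Qed.

Lemma qim_of (V : lmodType CC) (Y : V -> int -> V -> V) (one : V) (A : comPzRingType) (pi : V -> A)
  (Hpi : is_C2_quotient Y one pi) (M : V -> Prop) (HM : is_subspace M) (HC2M : forall x : V, C2 Y x -> M x) x :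
  qimage pi M (pi x) -> M x.
Proof.
move=> [y [My e]]; have [_ hMadd _] := HM.
have [_ _ hk _ _] := Hpi.
have hc : C2 Y (x - y) by apply/hk; rewrite (piB Hpi) e subrr.
by rewrite -(subrK y x); apply: hMadd => //; apply: HC2M.
Qed.

Lemma qim_muln (V : lmodType CC) (Y : V -> int -> V -> V) (one : V) (A : comPzRingType) (pi : V -> A)
  (Hpi : is_C2_quotient Y one pi) (M : V -> Prop) (HM : is_subspace M) z k :
  qimage pi M z -> qimage pi M (z *+ k).
Proof.
move=> [y [My <-]]; have [hM0 hMadd _] := HM; have [hadd _ _ _ _] := Hpi.
elim: k => [|k [y' [My' e]]]; first by exists 0; rewrite (pi0 Hpi) mulr0n.
by exists (y + y'); split; [apply: hMadd | rewrite hadd e mulrS].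
Qed.

Lemma iter_cons (V : lmodType CC) (Y : V -> int -> V -> V) v n s :
  iterprod Y v (n :: s) = Y v n (iterprod Y v s).
Proof. by []. Qed.

Lemma pi_iter (V : lmodType CC) (Y : V -> int -> V -> V) (one : V) (A : comPzRingType) (pi : V -> A)
  (Hpi : is_C2_quotient Y one pi) v k :
  pi (iterprod Y v (nseq k (-1))) = pi v ^+ k.+1.
Proof.
have [_ _ _ hm _] := Hpi.
elim: k => [|k IH]; first by rewrite expr1.
by rewrite (_ : nseq k.+1 (-1) = -1 :: nseq k (-1)) // iter_cons hm IH -exprS.
Qed.

Lemma C2_v0iter (V : lmodType CC) (Y : V -> int -> V -> V) (one : V) (HV : is_vertex_algebra Y one) v k :
  C2 Y (Y v 0 (iterprod Y v (nseq k (-1)))).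
Proof.
elim: k => [|k IH]; first exact: (skewC2 HV v).
rewrite (_ : nseq k.+1 (-1) = -1 :: nseq k (-1)) // iter_cons (Yderiv HV).
apply: C2_add.
  by apply: (C2_right HV) => //; exact: (skewC2 HV v).
by apply: (C2_left HV).
Qed.

Lemma C2_iter (V : lmodType CC) (Y : V -> int -> V -> V) (one : V) (HV : is_vertex_algebra Y one) v s :
  all in01 s -> ~~ all (pred1 (-1)) s -> C2 Y (iterprod Y v s).
Proof.
elim: s => [|n s IH] // /andP [hn hs]; rewrite iter_cons [all _ (_ :: _)]/=.
case: (boolP (all (pred1 (-1)) s)) => h.
  rewrite andbT => hn1.
  have -> : n = 0 by move: hn hn1; rewrite /in01 => /orP [/eqP -> | /eqP ->].
  by move/all_pred1P: h => ->; apply: C2_v0iter HV v _.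
move=> _; apply: (C2_left HV); last exact: IH.
by move: hn; rewrite /in01 => /orP [/eqP -> | /eqP ->].
Qed.

Lemma pi_b0 (V : lmodType CC) (Y : V -> int -> V -> V) (one : V) (HV : is_vertex_algebra Y one)
  (A : comPzRingType) (pi : V -> A) (Hpi : is_C2_quotient Y one pi) b v k :
  pi (Y b 0 (iterprod Y v (nseq k (-1)))) = pi (Y b 0 v) * pi v ^+ k *+ k.+1.
Proof.
have [hadd _ _ hm _] := Hpi.
elim: k => [|k IH]; first by rewrite expr0 mulr1.
rewrite (_ : nseq k.+1 (-1) = -1 :: nseq k (-1)) // iter_cons (Yderiv HV) hadd !hm IH (pi_iter Hpi).
rewrite !exprS; ring.
Qed.

Lemma pi_r0 (V : lmodType CC) (Y : V -> int -> V -> V) (one : V) (HV : is_vertex_algebra Y one)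
  (A : comPzRingType) (pi : V -> A) (Hpi : is_C2_quotient Y one pi) v w k :
  pi (Y (iterprod Y v (nseq k (-1))) 0 w) = pi v ^+ k * pi (Y v 0 w) *+ k.+1.
Proof.
have [hadd _ _ hm _] := Hpi.
elim: k => [|k IH]; first by rewrite expr0 mul1r.
rewrite (_ : nseq k.+1 (-1) = -1 :: nseq k (-1)) // iter_cons.
rewrite (pi_C2 Hpi (Yrderiv HV _ _ _)) hadd !hm IH (pi_iter Hpi).
rewrite mulrnAr mulrA -exprS [in RHS]mulrS addrC; by [].
Qed.
Unset Implicit Arguments.

Theorem mainTheorem1 (V : lmodType CC) (Y : V -> int -> V -> V) (one : V)
  (HV : is_vertex_algebra Y one)
  (M : V -> Prop) (HM : is_subspace M) (HC2M : forall x : V, C2 Y x -> M x)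
  (A : comPzRingType) (pi : V -> A) (Hpi : is_C2_quotient Y one pi) :
  (forall a : V, r01 Y M a <-> rad_alg (qimage pi M) (pi a)) /\
  (forall a : V, sr01 Y M a <-> srad_alg (qimage pi M) (pi a)) /\
  (MZ01 Y M <-> MZsub (qimage pi M)).
Proof.
have [hadd hsurj hker hmul hone] := Hpi.
have qM : forall x, M x -> qimage pi M (pi x) by move=> x Mx; exists x.
have Mq : forall x, qimage pi M (pi x) -> M x := qim_of Hpi HM HC2M.
have all_nseq1 : forall k, all in01 (nseq k (-1)).
  by move=> k; elim: k.
have in01le : forall r, in01 r -> r <= 0.
  by move=> r; rewrite /in01 => /orP [/eqP -> | /eqP ->].
have P1 : forall a : V, r01 Y M a <-> rad_alg (qimage pi M) (pi a).
  move=> a; split.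
    move=> [m Hm]; exists m.+1; split => // t ht.
    have [t' et] : exists t', t = t'.+1 by exists t.-1; lia.
    rewrite et -(pi_iter Hpi); apply: qM; apply: Hm; first exact: all_nseq1.
    rewrite size_nseq; lia.
  move=> [m [_ Hm]]; exists m => s hs hsz.
  case: (boolP (all (pred1 (-1)) s)) => h.
    move/all_pred1P: h hsz => ->; rewrite size_nseq => hsz.
    apply: Mq; rewrite (pi_iter Hpi); apply: Hm; lia.
  by apply: HC2M; apply: (C2_iter HV).
have P2 : forall a : V, sr01 Y M a <-> srad_alg (qimage pi M) (pi a).
  move=> a; split.
    move=> [Hl _] b c.
    have [x ex] := hsurj (b * c).
    have [m Hm] := Hl x.
    exists m.+1; split => // t ht.
    have [t' et] : exists t', t = t'.+1 by exists t.-1; lia.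
    have := Hm (-1) (nseq t' (-1)) isT (all_nseq1 _) ltac:(rewrite size_nseq; lia).
    move/qM; rewrite hmul (pi_iter Hpi) ex -et.
    by rewrite mulrAC.
  move=> Hs; split.
    move=> b.
    have [m1 [_ H1]] := Hs (pi b) 1.
    have [m2 [_ H2]] := Hs (pi (Y b 0 a)) 1.
    exists (maxn m1 m2) => r s hr hs hsz.
    case: (boolP (all (pred1 (-1)) s)) => h.
      move/all_pred1P: h hsz => ->; rewrite size_nseq => hsz.
      apply: Mq; move: hr; rewrite /in01 => /orP [/eqP -> | /eqP ->].
        rewrite (pi_b0 HV Hpi); apply: (qim_muln Hpi HM).
        by rewrite -[_ * _]mulr1; apply: H2; lia.
      rewrite hmul (pi_iter Hpi) -[_ * _]mulr1; apply: H1; lia.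
    by apply: HC2M; apply: (C2_left HV); [apply: in01le | apply: (C2_iter HV)].
  move=> w.
  have [m1 [_ H1]] := Hs 1 (pi w).
  have [m2 [_ H2]] := Hs 1 (pi (Y a 0 w)).
  exists (maxn m1 m2) => r s hr hs hsz.
  case: (boolP (all (pred1 (-1)) s)) => h.
    move/all_pred1P: h hsz => ->; rewrite size_nseq => hsz.
    apply: Mq; move: hr; rewrite /in01 => /orP [/eqP -> | /eqP ->].
      rewrite (pi_r0 HV Hpi); apply: (qim_muln Hpi HM).
      by rewrite -[pi a ^+ _]mul1r; apply: H2; lia.
    rewrite hmul (pi_iter Hpi) -[pi a ^+ _]mul1r; apply: H1; lia.
  by apply: HC2M; apply: (C2_right HV); [apply: in01le | apply: (C2_iter HV)].
split => //; split => //; split.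
  move=> H z; have [x <-] := hsurj z.
  by rewrite -P1 -P2; apply: H.
by move=> H v; rewrite P1 P2; apply: H.
Qed.
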